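(* Let $X_1,X_2,\dots$ be nonnegative random variables (task durations), $S_1,S_2,\dots$ i.i.d. exponential random variables with parameter $\lambda>0$, and $a_1,a_2,\dots\in\{0,1\}$ arbitrary decisions. Let $T>0$, $\theta=\min\{n\in\mathbb N:\sum_{i=1}^n(S_i+X_ia_i)>T\}$ and $S=2\lambda T+1$. Then $$\mathbb E\big[(\theta-S)_+\big]\le4.$$
   Context: $(z)_+=\max\{z,0\}$. *)

(* Defs.v *)
From HB Require Import structures.
From mathcomp Require Import all_boot all_order all_algebra.
From mathcomp Require Import all_classical all_reals all_analysis.
Set Implicit Arguments. Unset Strict Implicit. Unset Printing Implicit Defensive.
Import Order.TTheory GRing.Theory Num.Theory.
Local Open Scope classical_set_scope.
Local Open Scope ring_scope.

Definition mutually_independent d (T : measurableType d) (R : realType)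
    (P : probability T R) (S : nat -> {RV P >-> R}) : Prop :=
  forall (I : seq nat) (B : nat -> set R), uniq I ->
    (forall i, i \in I -> measurable (B i)) ->
    P (\bigcap_(i in [set` I]) (S i @^-1` B i)) =
    (\prod_(i <- I) P (S i @^-1` B i))%E.

Definition iid_exponential d (T : measurableType d) (R : realType)
    (P : probability T R) (lambda : R) (S : nat -> {RV P >-> R}) : Prop :=
  mutually_independent S /\
  forall i (A : set R), measurable A ->
    distribution P (S i) A = exponential_prob lambda A.

(* theta(w) = min { n : sum_{i<n} (S_i + X_i a_i)(w) > T } as an extended
   real; it is +oo if the set is empty (the minimum of the empty set).
   Index shift: (S i, X i, a i) for i < n are the paper's S_1..S_n etc.
   n = 0 never qualifies since T > 0, so this is the paper's min over n >= 1. *)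
Definition theta d (T : measurableType d) (R : realType)
    (S X a : nat -> T -> R) (Tm : R) (w : T) : \bar R :=
  ereal_inf [set (n%:R)%:E | n in
    [set n : nat | Tm < \sum_(i < n) (S i w + X i w * a i w)]].

(* Main.v *)
Require Import Defs.
From HB Require Import structures.
From mathcomp Require Import all_boot all_order all_algebra.
From mathcomp Require Import all_classical all_reals all_analysis.
From mathcomp Require Import ring lra.
Import Order.TTheory GRing.Theory Num.Theory.
Local Open Scope classical_set_scope.
Local Open Scope ring_scope.
Set Implicit Arguments. Unset Strict Implicit. Unset Printing Implicit Defensive.

Section bins.
Context d (Omega : measurableType d) (R : realType) (P : probability Omega R).
Variables (l : R) (l0 : 0 < l) (Y : {RV P >-> R}).
Hypothesis hY : forall A : set R, measurable A -> distribution P Y A = exponential_prob l A.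

Local Notation D := (distribution P Y).

Lemma bin0c x : 0 < x -> D `[0, x] = (1 - expR (- l * x))%:E.
Proof. by move=> x0; rewrite hY // exponential_prob_itv0c. Qed.

Lemma binneg : D `]-oo, 0[ = 0%E.
Proof.
rewrite hY //; rewrite /exponential_prob integral0_eq // => x /=.
rewrite in_itv /= => x0; by rewrite lt0_exponential_pdf.
Qed.

Lemma binoc a b : 0 < a -> a < b -> D `]a, b] = (expR (- l * a) - expR (- l * b))%:E.
Proof.
move=> a0 ab.
have E : `[0, b]%classic = `[0, a]%classic `|` `]a, b]%classic :> set R.
  apply/seteqP; split => x /=; rewrite !in_itv /=.
    move=> /andP[x0 xb]; case: (leP x a) => xa; [left|right]; apply/andP; split => //.
  case=> /andP[h1 h2]; apply/andP; split => //; [exact: le_trans h2 (ltW ab)| exact: le_trans (ltW a0) (ltW h1)].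
have dis : `[0, a]%classic `&` `]a, b]%classic = set0 :> set R.
  apply/seteqP; split => x //=; rewrite !in_itv /= => -[/andP[_ h1] /andP[h2 _]].
  by move: (le_lt_trans h1 h2); rewrite ltxx.
have := measureU D (measurable_itv `[0, a]) (measurable_itv `]a, b]) dis.
rewrite -E /= !bin0c //; last exact: lt_trans ab.
have fp : (D `]a, b] \is a fin_num).
  rewrite ge0_fin_numE //; apply: le_lt_trans (probability_le1 _ _) _ => //.
  by rewrite ltry.
rewrite -(fineK fp) -EFinD. move=> H0. have H1 := EFin_inj H0. congr EFin. lra.
Qed.

Lemma binoy c : 0 < c -> (D `]c, +oo[ <= (expR (- l * c))%:E)%E.
Proof.
move=> c0.
have dis : `[0, c]%classic `&` `]c, +oo[%classic = set0 :> set R.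
  apply/seteqP; split => x //=; rewrite !in_itv /= => -[/andP[_ h1] h2].
  rewrite andbT in h2.
  by move: (le_lt_trans h1 h2); rewrite ltxx.
have := measureU D (measurable_itv `[0, c]) (measurable_itv `]c, +oo[) dis.
move=> /= H; rewrite bin0c // in H.
have := probability_le1 D (measurableU _ _ (measurable_itv `[0, c]) (measurable_itv `]c, +oo[)).
rewrite /= H.
have fp : (D `]c, +oo[ \is a fin_num).
  rewrite ge0_fin_numE //; apply: le_lt_trans (probability_le1 _ _) _ => //.
  by rewrite ltry.
rewrite -(fineK fp) -EFinD !lee_fin. move=> H2. lra.
Qed.
End bins.
Definition Kb : nat := 16.
Definition rho {R : realType} : R := 9/10.
Definition bin {R : realType} (h : R) (j : nat) : set R :=
  if j == 0%N then `[0, h]%classic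
  else if (j < Kb)%N then `]j%:R * h, j.+1%:R * h]%classic
  else `]Kb%:R * h, +oo[%classic.
Definition pb {R : realType} (j : nat) : R :=
  if (j < Kb)%N then rho ^+ (2 * j) - rho ^+ (2 * j + 2) else rho ^+ (2 * Kb).

Lemma rho_ge0 {R : realType} : 0 <= (rho : R). Proof. rewrite /rho; lra. Qed.
Lemma rho_le1 {R : realType} : (rho : R) <= 1. Proof. rewrite /rho; lra. Qed.

Lemma pb_ge0 {R : realType} j : 0 <= (pb j : R).
Proof.
rewrite /pb; case: ifP => _; last exact: exprn_ge0 rho_ge0.
rewrite subr_ge0; apply: ler_wiXn2l; [exact: rho_ge0 | exact: rho_le1 | ].
by rewrite leq_addr.
Qed.

Lemma bin_meas {R : realType} (h : R) j : measurable (bin h j).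
Proof. by rewrite /bin; case: ifP => _; [|case: ifP => _]; exact: measurable_itv. Qed.

Lemma bin_lb {R : realType} (h : R) j x : 0 < h -> (j <= Kb)%N -> bin h j x -> j%:R * h <= x.
Proof.
move=> h0 jK; rewrite /bin; case: eqP => [-> | j0]; first by rewrite mul0r /= in_itv /= => /andP[].
case: ifP => jK2 /=; rewrite in_itv /=; first by move=> /andP[/ltW].
have -> : j = Kb by apply/eqP; rewrite eqn_leq jK leqNgt jK2.
by rewrite andbT => /ltW.
Qed.

Lemma bin_cover {R : realType} (h : R) x : 0 < h -> 0 <= x -> exists j : 'I_Kb.+1, bin h j x.
Proof.
move=> h0 x0.
suff : forall m, (1 <= m <= Kb)%N -> (exists2 j, (j < m)%N & bin h j x) \/ m%:R * h < x.
  move=> /(_ Kb isT) [[j jm bj]|Kx].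
    by exists (Ordinal (ltn_trans jm (ltnSn _))).
  by exists ord_max; rewrite /bin /= in_itv /= andbT.
elim=> [//|m IH] /andP[m1 mK].
have [m0|m0] := posnP m.
  subst m; case: (leP x h) => xh; [left|right]; last by rewrite mul1r.
  by exists 0%N => //; rewrite /bin /= in_itv /= x0 xh.
have [[j jm bj]|mx] := IH (introT andP (conj m0 (ltnW mK))).
  by left; exists j => //; exact: ltn_trans jm (ltnSn _).
case: (leP x (m.+1%:R * h)) => xh; [left|right] => //.
exists m => //; rewrite /bin; have -> : (m == 0%N) = false by apply/negbTE; rewrite -lt0n.
by rewrite mK /= in_itv /= mx xh.
Qed.

Section bins2.
Context d (Omega : measurableType d) (R : realType) (P : probability Omega R).
Variables (l : R) (l0 : 0 < l) (Y : {RV P >-> R}).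
Hypothesis hY : forall A : set R, measurable A -> distribution P Y A = exponential_prob l A.
Variables (u h : R) (hu : expR u = rho) (hh : h = - (2 * u) / l).

Lemma expR_grid m : expR (- l * (m%:R * h)) = rho ^+ (2 * m).
Proof.
have -> : - l * (m%:R * h) = m%:R * (u + u).
  rewrite hh; field; exact: lt0r_neq0.
by rewrite expRM_natl expRD hu exprM expr2.
Qed.

Lemma h_gt0 : 0 < h.
Proof.
have u0 : u < 0 by rewrite -expR_lt1 hu /rho; lra.
rewrite hh; apply: divr_gt0 => //; lra.
Qed.

Lemma bin_le j : (distribution P Y (bin h j) <= (pb j)%:E)%E.
Proof.
have h0 := h_gt0.
rewrite /bin /pb; case: eqP => [-> | j0].
  rewrite /= (bin0c hY) //; have := expR_grid 1; rewrite mul1r => ->.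
  by rewrite expr0.
case: ifP => jK.
  rewrite (binoc hY) //; last first.
    by rewrite ltr_pM2r // ltr_nat.
    by rewrite mulr_gt0 // ltr0n lt0n; apply/eqP.
  by rewrite !expR_grid mulnS addn2.
apply: le_trans (binoy hY _) _ => //; first by rewrite mulr_gt0.
by rewrite expR_grid.
Qed.
End bins2.

Lemma geo_tele {R : realType} (x : R) n : (\sum_(j < n) x ^+ j) * (1 - x) = 1 - x ^+ n.
Proof.
elim: n => [|n IH]; first by rewrite big_ord0 mul0r expr0 subrr.
by rewrite big_ord_recr /= mulrDl IH exprSr; ring.
Qed.

Lemma sqle {R : realType} (a c : R) : 0 <= a -> a <= c -> a ^+ 2 <= c ^+ 2.
Proof. move=> a0 ac; rewrite !expr2; apply: ler_pM => //. Qed.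

Lemma e16 {R : realType} : ((729/1000 : R) ^+ 16) <= 1/20.
Proof.
set x : R := 729/1000.
have x0 : 0 <= x by rewrite /x; lra.
have -> : x ^+ 16 = (((x ^+ 2) ^+ 2) ^+ 2) ^+ 2 by rewrite -!exprM.
have e2 : x ^+ 2 <= 6/10 by rewrite expr2 /x; lra.
have e4 : (x ^+ 2) ^+ 2 <= 4/10.
  apply: le_trans (sqle (exprn_ge0 _ x0) e2) _; rewrite expr2; lra.
have e8 : ((x ^+ 2) ^+ 2) ^+ 2 <= 2/10.
  apply: le_trans (sqle (exprn_ge0 _ (exprn_ge0 _ x0)) e4) _; rewrite expr2; lra.
apply: le_trans (sqle (exprn_ge0 _ (exprn_ge0 _ (exprn_ge0 _ x0))) e8) _; rewrite expr2; lra.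
Qed.

Lemma Q_le {R : realType} : \sum_(j < Kb.+1) (rho : R) ^+ j * pb j <= 3/4.
Proof.
rewrite big_ord_recr /=.
have -> : \sum_(i < Kb) (rho : R) ^+ i * pb i = \sum_(i < Kb) (19/100) * ((rho ^+ 3) ^+ i).
  apply: eq_bigr => i _; rewrite /pb ltn_ord exprD.
  have e : (rho : R) ^+ i * rho ^+ (2 * i) = (rho ^+ 3) ^+ i by rewrite -exprD -exprM mulSn.
  have e2 : (rho : R) ^+ 2 = 81/100 by rewrite /rho expr2; lra.
  rewrite e2 mulrBr mulrA e; lra.
rewrite /pb ltnn -mulr_sumr.
have := geo_tele (rho ^+ 3 : R) Kb.
have -> : (rho : R) ^+ Kb * rho ^+ (2 * Kb) = (rho ^+ 3) ^+ Kb.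
  by rewrite -exprD -exprM mulSn.
have x3 : (rho : R) ^+ 3 = 729/1000 by rewrite /rho !exprS expr0; lra.
rewrite x3.
have := @e16 R.
have : 0 <= ((729/1000 : R) ^+ Kb) by apply: exprn_ge0; lra.
rewrite /Kb.
move: ((729/1000 : R) ^+ 16) => y.
move: (\sum_(i < 16) (729 / 1000 : R) ^+ i) => S.
move=> y0 y1 HS.
lra.
Qed.
Lemma le_integral_nm d (T : measurableType d) (R : realType)
  (mu : {measure set T -> \bar R}) (f g : T -> \bar R) :
  (forall x, (0 <= f x)%E) -> (forall x, (f x <= g x)%E) ->
  (\int[mu]_x f x <= \int[mu]_x g x)%E.
Proof.
move=> f0 fg.
have g0 : forall x, (0 <= g x)%E by move=> x; exact: le_trans (f0 x) (fg x).
rewrite !ge0_integralE //= !patch_setT.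
apply: le_ereal_sup => _ [h hf <-]; exists h => //= x.
exact: le_trans (hf x) (fg x).
Qed.

Lemma union_bound d (T : measurableType d) (R : realType)
  (mu : {measure set T -> \bar R}) (I : Type) (s : seq I) (P : pred I)
  (A : I -> set T) : (forall i, measurable (A i)) ->
  (mu (\big[setU/set0]_(i <- s | P i) A i) <= \sum_(i <- s | P i) mu (A i))%E.
Proof.
move=> mA; elim: s => [|x s IH]; first by rewrite !big_nil measure0.
rewrite !big_cons; case: ifP => // Px.
apply: le_trans (measureU2 _ _ _) _ => //; first exact: bigsetU_measurable.
exact: leeD.
Qed.

Lemma mem_bigsetU (T : Type) (I : eqType) (s : seq I) (p : pred I) (A : I -> set T) i x :
  i \in s -> p i -> A i x -> (\big[setU/set0]_(j <- s | p j) A j) x.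
Proof.
elim: s => [//|y s IH]; rewrite in_cons big_cons => /orP[/eqP <- pi Ai|iS pi Ai].
  by rewrite pi; left.
by case: ifP => _; [right|]; exact: IH.
Qed.

Lemma prod_le d (T : measurableType d) (R : realType) (mu : {measure set T -> \bar R})
  (s : seq nat) (F : nat -> set T) (g : nat -> R) :
  (forall i, 0 <= g i) -> (forall i, (mu (F i) <= (g i)%:E)%E) ->
  (\prod_(i <- s) mu (F i) <= (\prod_(i <- s) g i)%:E)%E.
Proof.
move=> g0 Fg; elim: s => [|x s IH]; first by rewrite !big_nil.
rewrite !big_cons EFinM; apply: lee_pmul => //.
by apply: prode_ge0.
Qed.

Lemma tail_bound d (Omega : measurableType d) (R : realType) (P : probability Omega R)
  (l Tm : R) (S : nat -> {RV P >-> R}) :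
  0 < l -> iid_exponential l S -> forall n : nat,
  (P [set w | (\sum_(i < n) S i w <= Tm)%R] <= (expR (l * Tm / 2) * (3/4) ^+ n)%:E)%E.
Proof.
move=> l0 [indep hdist] n.
have [u hu] : exists u, expR u = (rho : R) by apply: expR_total; rewrite /rho; lra.
set h := - (2 * u) / l.
have h0 : 0 < h := h_gt0 l0 hu erefl.
pose psi (phi : {ffun 'I_n -> 'I_Kb.+1}) (i : nat) : nat :=
  if (insub i : option 'I_n) is Some k then nat_of_ord (phi k) else 0%N.
have psiE phi (i : 'I_n) : psi phi (val i) = phi i by rewrite /psi valK.
pose C phi := \bigcap_(i in [set` iota 0 n]) (S i @^-1` bin h (psi phi i)).
pose good (phi : {ffun 'I_n -> 'I_Kb.+1}) := (\sum_(i < n) (phi i)%:R * h <= Tm).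
pose Neg := \big[setU/set0]_(i <- iota 0 n) (S i @^-1` `]-oo, 0[%classic).
pose U := \big[setU/set0]_(phi | good phi) C phi.
have mC phi : measurable (C phi).
  apply: bigcap_measurableType => k _; apply: measurable_funPTI; exact: bin_meas.
have mNeg : measurable Neg.
  by apply: bigsetU_measurable => i _; apply: measurable_funPTI; exact: measurable_itv.
have mU : measurable U by apply: bigsetU_measurable => phi _; exact: mC.
have sub : [set w | \sum_(i < n) S i w <= Tm] `<=` Neg `|` U.
  move=> w /= Hw.
  case: (boolP [exists i : 'I_n, S i w < 0]) => [/existsP [i Hi] | /existsPn Hn].
    left; apply: (@mem_bigsetU _ _ _ _ _ (val i)) => //.
      by rewrite mem_iota /= add0n ltn_ord.
  right.
  have cov : forall i : 'I_n, exists j : 'I_Kb.+1, bin h j (S i w).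
    move=> i; apply: bin_cover h0 _; have := Hn i; by rewrite ltNge negbK.
  pose phi := [ffun i => proj1_sig (cid (cov i))].
  have phiP i : bin h (phi i) (S i w) by rewrite ffunE; exact: (proj2_sig (cid (cov i))).
  apply: (@mem_bigsetU _ _ _ _ _ phi) => //; first exact: mem_index_enum.
    rewrite /good; apply: le_trans Hw; apply: ler_sum => i _; apply: bin_lb h0 _ (phiP i).
    by rewrite -ltnS ltn_ord.
  move=> i /=; rewrite mem_iota add0n => /andP[_ ilt].
  have -> : i = val (Ordinal ilt) by [].
  rewrite psiE; exact: phiP.
have PNeg : P Neg = 0%E.
  apply/eqP; rewrite eq_le measure_ge0 andbT.
  apply: le_trans (union_bound _ _ _ _) _ => [i|].
    apply: measurable_funPTI; exact: measurable_itv.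
  rewrite big1 // => i _; exact: (binneg (hdist i)).
have PC phi : (P (C phi) <= (\prod_(i < n) pb (phi i))%:E)%E.
  rewrite /C indep; [| exact: iota_uniq | move=> i _; exact: bin_meas].
  have -> : \prod_(i < n) (pb (phi i) : R) = \prod_(i <- iota 0 n) pb (psi phi i).
    have -> : iota 0 n = index_iota 0 n by rewrite /index_iota subn0.
    by rewrite big_mkord; apply: eq_bigr => i _; rewrite psiE.
  apply: prod_le => [i|i]; first exact: pb_ge0.
  exact: (bin_le l0 (hdist i) hu erefl).
have real_bd : \sum_(phi | good phi) \prod_(i < n) (pb (phi i) : R) <=
    expR (l * Tm / 2) * (3/4) ^+ n.
  rewrite big_mkcond /=.
  apply: le_trans (_ : \sum_(phi : {ffun 'I_n -> 'I_Kb.+1}) expR (l * Tm / 2) *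
     \prod_(i < n) ((rho : R) ^+ (phi i) * pb (phi i)) <= _).
    apply: ler_sum => phi _; case: ifP => gp.
      rewrite big_split /= prodrXr mulrA; apply: ler_peMl.
        by apply: prodr_ge0 => i _; exact: pb_ge0.
      rewrite -hu -expRM_natl -expRD; apply: le_trans (expR_ge1Dx _); rewrite lerDl.
      move: gp; rewrite /good -mulr_suml -natr_sum.
      move: (\sum_(i < n) _)%N => m gp.
      have -> : m%:R * u = - (l * (m%:R * h)) / 2 by rewrite /h; field; exact: lt0r_neq0.
      have : 0 <= l * (Tm - m%:R * h) by apply: mulr_ge0; [exact: ltW | rewrite subr_ge0].
      lra.
    apply: mulr_ge0; first exact: expR_ge0.
    by apply: prodr_ge0 => i _; apply: mulr_ge0; [exact: exprn_ge0 rho_ge0 | exact: pb_ge0].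
  rewrite -mulr_sumr -(bigA_distr_bigA (fun (i : 'I_n) (j : 'I_Kb.+1) => (rho : R) ^+ j * pb j)) /=.
  rewrite -(big_mkord xpredT (fun _ => \sum_(j < Kb.+1) (rho : R) ^+ j * pb j)) prodr_const_nat subn0.
  apply: ler_wpM2l; first exact: expR_ge0.
  apply: lerXn2r; rewrite ?nnegrE; [|lra|exact: Q_le].
  by apply: sumr_ge0 => j _; apply: mulr_ge0; [exact: exprn_ge0 rho_ge0 | exact: pb_ge0].
have mE : measurable [set w | (\sum_(i < n) S i w <= Tm)%R].
  have mf : measurable_fun setT (fun w => \sum_(i < n) S i w).
    by apply: measurable_sum => i; exact: measurable_funP.
  rewrite (_ : [set w | _] = (fun w => \sum_(i < n) S i w) @^-1` `]-oo, Tm]%classic); last first.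
    by apply/seteqP; split => w /=; rewrite in_itv.
  rewrite -[X in measurable X]setTI; exact: (mf measurableT _ (measurable_itv _)).
apply: le_trans (le_measure _ _ _ sub) _; rewrite ?inE //; first by apply: measurableU.
apply: le_trans (measureU2 _ _ _) _ => //.
rewrite [X in (X + _)%E]PNeg add0e.
apply: le_trans (union_bound _ _ _ _) _ => //.
apply: le_trans (_ : \sum_(phi | good phi) (\prod_(i < n) pb (phi i))%:E <= _)%E.
  by apply: lee_sum => phi _; exact: PC.
by rewrite sumEFin lee_fin.
Qed.

Lemma geom_le {R : realType} : (\sum_(k <oo) (((3/4 : R) ^+ k)%:E) <= 4%:E)%E.
Proof.
apply: (lime_le (is_cvg_nneseries _)) => [n _ _|]; first by rewrite lee_fin exprn_ge0 //; lra.
apply: nearW => k; rewrite sumEFin lee_fin big_mkord.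
have := geo_tele (3/4 : R) k.
have : 0 <= (3/4 : R) ^+ k by apply: exprn_ge0; lra.
move: ((3/4 : R) ^+ k) (\sum_(i < k) (3/4 : R) ^+ i) => y s y0 H; lra.
Qed.

Lemma eqy_of_ge {R : realType} (x : \bar R) : (forall M : nat, (M%:R%:E <= x)%E) -> x = +oo%E.
Proof.
case: x => [r| |] H //; last by have := H 0%N.
have := H (Num.truncn `|r|).+1; rewrite lee_fin.
have /andP[_ h2] := truncn_itv (normr_ge0 r).
have := ler_norm r; move=> h3 h4; exfalso; move: h2 h3 h4.
move: (((Num.truncn `|r|).+1)%:R : R) => t; lra.
Qed.

Lemma pointwise (Omega : Type) (R : realType) (S X a : nat -> Omega -> R) (Tm Sg : R) (n0 : nat) (w : Omega) :
  (forall i, 0 <= X i w) -> (forall i, a i w = 0 \/ a i w = 1) -> n0%:R <= Sg ->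
  (maxe (ereal_inf [set (n%:R)%:E | n in [set n : nat | (Tm < \sum_(i < n) (S i w + X i w * a i w))%R]] - Sg%:E) 0
   <= \sum_(k <oo) (\1_[set w | (\sum_(i < n0 + k) S i w <= Tm)%R] w)%:E)%E.
Proof.
move=> X0 a01 n0S.
have key : forall m, ~~ (Tm < \sum_(i < m) (S i w + X i w * a i w)) ->
    (\1_[set w | (\sum_(i < m) S i w <= Tm)%R] w = 1 :> R).
  move=> m; rewrite -leNgt => H; rewrite indicE mem_set //=.
  apply: le_trans H; apply: ler_sum => i _; rewrite lerDl; apply: mulr_ge0 => //.
  by case: (a01 i) => ->.
have ones : forall K : nat, (forall i, (i < K)%N -> ~~ (Tm < \sum_(j < n0 + i) (S j w + X j w * a j w))) ->
    (((K%:R : R))%:E <= \sum_(k <oo) (\1_[set w | (\sum_(i < n0 + k) S i w <= Tm)%R] w)%:E)%E.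
  move=> K Hk; apply: le_trans (nneseries_lim_ge K _) => [|i _ _]; last by rewrite lee_fin.
  rewrite big_mkord (eq_bigr (fun _ => 1%:E)); last by move=> i _; rewrite key //; exact: Hk.
  by rewrite sumEFin sumr_const card_ord.
case: (pselect (exists m, Tm < \sum_(i < m) (S i w + X i w * a i w))) => [ex|nex].
  case: (ex_minnP ex) => m Am mmin.
  have th : ereal_inf [set ((n%:R : R))%:E | n in [set n : nat | Tm < \sum_(i < n) (S i w + X i w * a i w)]] = ((m%:R : R))%:E.
    apply/eqP; rewrite eq_le; apply/andP; split.
      by apply: ereal_inf_lbound; exists m.
    apply: le_ereal_inf_tmp => _ [k Ak <-]; rewrite lee_fin ler_nat; exact: mmin.
  rewrite th; apply: le_trans (ones (m - n0)%N _); last first.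
    move=> i im; apply/negP => /mmin; rewrite ltn_subRL in im.
    by rewrite leqNgt im.
  rewrite ge_max; apply/andP; split; last by rewrite (_ : 0%E = 0%:E) // lee_fin ler0n.
  rewrite -EFinB lee_fin.
  case: (leqP n0 m) => hm; first by rewrite natrB //; lra.
  have -> : (m - n0)%N = 0%N by apply/eqP; rewrite subn_eq0 ltnW.
  have : (m%:R : R) < n0%:R by rewrite ltr_nat.
  lra.
have -> : [set ((n%:R : R))%:E | n in [set n : nat | Tm < \sum_(i < n) (S i w + X i w * a i w)]] = set0.
  by apply/seteqP; split => x // [n An _]; apply: nex; exists n.
rewrite ereal_inf0.
have -> : (\sum_(k <oo) ((\1_[set w | (\sum_(i < n0 + k) S i w <= Tm)%R] w : R))%:E)%E = +oo%E.
  apply: eqy_of_ge => M; apply: ones => i _; apply/negP => H; apply: nex; by exists (n0 + i)%N.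
exact: leey.
Qed.

Lemma measurable_Esum d (Omega : measurableType d) (R : realType) (P : probability Omega R)
  (S : nat -> {RV P >-> R}) (Tm : R) m :
  measurable [set w | (\sum_(i < m) S i w <= Tm)%R].
Proof.
have mf : measurable_fun setT (fun w => \sum_(i < m) S i w).
  by apply: measurable_sum => i; exact: measurable_funP.
rewrite (_ : [set w | _] = (fun w => \sum_(i < m) S i w) @^-1` `]-oo, Tm]%classic); last first.
  by apply/seteqP; split => w /=; rewrite in_itv.
rewrite -[X in measurable X]setTI; exact: (mf measurableT _ (measurable_itv _)).
Qed.

Unset Implicit Arguments.
Theorem lemmaF4 (d : measure_display) (Omega : measurableType d) (R : realType)
    (P : probability Omega R) (lambda Tm : R)
    (X : nat -> {RV P >-> R}) (S : nat -> {RV P >-> R})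
    (a : nat -> {RV P >-> R}) :
  0 < lambda -> 0 < Tm ->
  (forall i w, 0 <= X i w) ->
  iid_exponential lambda S ->
  (forall i w, a i w = 0 \/ a i w = 1) ->
  (\int[P]_w maxe (theta (fun i => S i) (fun i => X i) (fun i => a i) Tm w
                     - (2 * lambda * Tm + 1)%:E)%E 0%E <= 4%:E)%E.
Proof.
move=> l0 T0 X0 hiid a01.
set Sg := 2 * lambda * Tm + 1.
have Sg0 : 0 <= Sg by rewrite /Sg; apply: addr_ge0 => //; apply: mulr_ge0; [apply: mulr_ge0|]; lra.
pose n0 := Num.truncn Sg.
have /andP[n0S Sgn0] := truncn_itv Sg0.
pose E k := [set w | (\sum_(i < n0 + k) S i w <= Tm)%R].
apply: le_trans (le_integral_nm _ (g := fun w => (\sum_(k <oo) ((\1_(E k) w : R))%:E)%E) _ _) _.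
- by move=> w; rewrite le_max lexx orbT.
- move=> w; rewrite /theta; have := (@pointwise Omega R (fun i => S i) (fun i => X i) (fun i => a i) Tm Sg n0 w (fun i => X0 i w) (fun i => a01 i w) n0S). exact.
rewrite integral_nneseries //; last first.
  move=> k; apply/measurable_realfun.measurable_EFinP; apply: measurable_realfun.measurable_indic; exact: measurable_Esum.
apply: le_trans geom_le.
apply: lee_nneseries => [k _ _|k _]; first by apply: integral_ge0 => w _; rewrite lee_fin indicE.
rewrite integral_indic ?setIT; last exact: measurable_Esum.
apply: le_trans (tail_bound Tm l0 hiid (n0 + k)) _.
rewrite lee_fin exprD mulrA; apply: ler_piMl; first by apply: exprn_ge0; lra.
have h34 : (3/4 : R) <= expR (- (1/4)) by apply: le_trans (expR_ge1Dx _); lra.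
apply: le_trans (ler_wpM2l (expR_ge0 _) (lerXn2r n0 _ _ h34)) _; rewrite ?nnegrE ?expR_ge0 //.
rewrite -expRM_natl -expRD expR_le1.
  have H : Sg < n0%:R + 1 by rewrite natr1.
  move: H; rewrite /Sg; move: (n0%:R : R) => t H; lra.
exact: measurableT.
Qed.
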